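(* Let $F=(f^{(1)},f^{(2)},\dots,f^{(j)},\dots)$ be a non-degenerate circular net with a family of spherical curvature lines, where $f^{(j)}$ lies on the sphere $s_j\in\mathbb{P}(\mathcal{L})$, the spheres $s_1,s_2,\dots$ are pairwise distinct, and their representatives are normalized by $\langle \mathfrak{s}_j,\mathfrak{p}\rangle=-1$ for all $j$. Let $\lambda_{12},\lambda_{23},\dots,\lambda_{j,j+1},\dots\in\mathbb{R}$ be arbitrary (folding parameters). Define $\sigma_{12}$ to be the inversion in $$\mathfrak{n}_{12}:=\mathfrak{s}_1+\lambda_{12}\mathfrak{s}_2-(1+\lambda_{12})\mathfrak{p},$$ and recursively, for $j\ge 2$, with $\Phi_j:=\sigma_{j-1,j}\circ\cdots\circ\sigma_{12}$, $\bar{\mathfrak{s}}_j:=\Phi_j(\mathfrak{s}_j)$ and $\hat{\mathfrak{s}}_{j+1}:=\Phi_j(\mathfrak{s}_{j+1})$, let $\sigma_{j,j+1}$ be the inversion in $$\mathfrak{n}_{j,j+1}:=\bar{\mathfrak{s}}_j+\lambda_{j,j+1}\hat{\mathfrak{s}}_{j+1}-(1+\lambda_{j,j+1})\mathfrak{p}.$$ Then the net $$\tilde F:=\big(f^{(1)},\ \sigma_{12}(f^{(2)}),\ \dots,\ \sigma_{k-1,k}\circ\cdots\circ\sigma_{12}(f^{(k)}),\ \dots\big)$$ is again a circular net with a family of spherical curvature lines, the $k$-th curve lying on the sphere $\bar{\mathfrak{s}}_k$ (with $\bar{\mathfrak{s}}_1:=\mathfrak{s}_1$).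
   Context: Light cone model: $\mathbb{R}^{4,2}$ is $\mathbb{R}^6$ with a symmetric bilinear form $\langle\cdot,\cdot\rangle$ of signature $(4,2)$; $\mathcal{L}=\{v:\langle v,v\rangle=0\}$ and $\mathbb{P}(\mathcal{L})$ is its projectivization. A fixed vector $\mathfrak{p}$ (point sphere complex) with $\langle\mathfrak{p},\mathfrak{p}\rangle=-1$ is given; elements $v\in\mathbb{P}(\mathcal{L})$ with $\langle\mathfrak{v},\mathfrak{p}\rangle=0$ represent points of $\mathbb{R}^3\cup\{\infty\}$, the others represent oriented spheres (planes count as spheres). A point lies on a sphere iff their representatives are orthogonal. Fraktur letters denote representatives (homogeneous coordinates). For $\mathfrak{a}$ with $\langle\mathfrak{a},\mathfrak{a}\rangle\neq0$ the inversion in $\mathfrak{a}$ is $\sigma_a(x)=x-\frac{2\langle x,\mathfrak{a}\rangle}{\langle\mathfrak{a},\mathfrak{a}\rangle}\mathfrak{a}$; it is an M-inversion if $\langle\mathfrak{a},\mathfrak{p}\rangle=0$ (M-inversions map points to points and generate the Möbius transformations). Four points are concircular iff their representatives are linearly dependent. A discrete curve is a map $f:\mathcal{V}\to\mathbb{P}(\mathcal{L})$ into points, $\mathcal{V}$ a set of consecutive integers, edges $(ij)$ joining consecutive vertices. Two discrete curves $f,g$ on the same $\mathcal{V}$ form a Ribaucour pair if for every edge $(ij)$ the points $f_i,f_j,g_j,g_i$ are concircular. A circular net with a family of spherical curvature lines is a sequence $(f^{(1)},f^{(2)},\dots)$ of discrete curves on a common vertex set such that consecutive curves form Ribaucour pairs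 and each $f^{(j)}$ lies on a sphere $s_j$ (i.e. $\langle\mathfrak{f}^{(j)}_t,\mathfrak{s}_j\rangle=0$ for all $t$); it is non-degenerate if consecutive curves lie on distinct spheres. The deformation $F\mapsto\tilde F$ is called a lifted-folding and the $\sigma_{j,j+1}$ folding inversions. *)

(* Defs.v *)
From HB Require Import structures.
From mathcomp Require Import all_boot all_order all_algebra.
Set Implicit Arguments. Unset Strict Implicit. Unset Printing Implicit Defensive.
Import Order.TTheory GRing.Theory Num.Theory.
Local Open Scope ring_scope.

Section LightCone.
Variable R : realFieldType.
Notation vec := 'rV[R]_6.

Definition lor (x y : vec) : R :=
  \sum_(i < 6) (if (i < 4)%N then 1 else -1) * x ord0 i * y ord0 i.

(* Two representatives define the same element of P(L). *)
Definition proj_eq (u v : vec) : Prop := exists c : R, c != 0 /\ u = c *: v.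

(* Representatives of points and of (oriented) spheres, w.r.t. the point
   sphere complex p. *)
Definition is_point (p x : vec) : Prop := x != 0 /\ lor x x = 0 /\ lor x p = 0.
Definition is_sphere (p x : vec) : Prop := x != 0 /\ lor x x = 0 /\ lor x p != 0.

Definition inversion (a x : vec) : vec := x - ((2 * lor x a) / lor a a) *: a.

Definition concircular (a b c d : vec) : Prop :=
  exists k1 k2 k3 k4 : R,
    [|| k1 != 0, k2 != 0, k3 != 0 | k4 != 0] /\
    k1 *: a + k2 *: b + k3 *: c + k4 *: d = 0.

Definition consecutive (V : int -> Prop) : Prop :=
  forall i j k : int, V i -> V k -> (i <= j <= k)%R -> V j.

Definition discrete_curve (p : vec) (V : int -> Prop) (f : int -> vec) : Prop :=
  forall t, V t -> is_point p (f t).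

Definition ribaucour (V : int -> Prop) (f g : int -> vec) : Prop :=
  forall t : int, V t -> V (t + 1) -> concircular (f t) (f (t + 1)) (g (t + 1)) (g t).

Definition in_net (len : option nat) (j : nat) : bool :=
  (1 <= j)%N && (if len is Some n then (j <= n)%N else true).

Definition circ_net_sph (p : vec) (V : int -> Prop) (len : option nat)
    (F : nat -> int -> vec) (S : nat -> vec) : Prop :=
  (forall j, in_net len j ->
     [/\ discrete_curve p V (F j), is_sphere p (S j) &
         forall t, V t -> lor (F j t) (S j) = 0]) /\
  (forall j, in_net len j -> in_net len j.+1 -> ribaucour V (F j) (F j.+1)).

Definition nondeg_net (len : option nat) (S : nat -> vec) : Prop :=
  forall j, in_net len j -> in_net len j.+1 -> ~ proj_eq (S j) (S j.+1).

(* Phi p s lam j = Phi_j = sigma_{j-1,j} o ... o sigma_{12}  (Phi_1 = id),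
   where lam j = lambda_{j,j+1} and sigma_{j,j+1} is the inversion in
   n_{j,j+1} = Phi_j(s_j) + lam j Phi_j(s_{j+1}) - (1 + lam j) p. *)
Fixpoint Phi (p : vec) (s : nat -> vec) (lam : nat -> R) (j : nat) : vec -> vec :=
  match j with
  | 0 => id
  | 1 => id
  | j'.+1 =>
      let P := Phi p s lam j' in
      inversion (P (s j') + lam j' *: P (s j) - (1 + lam j') *: p) \o P
  end.

End LightCone.

(* Main.v *)
Require Import Defs.
From HB Require Import structures.
From mathcomp Require Import all_boot all_order all_algebra.
From mathcomp Require Import ring zify.
Import Order.TTheory GRing.Theory Num.Theory.
Local Open Scope ring_scope.

Lemma lorC {R : realFieldType} (x y : 'rV[R]_6) : lor x y = lor y x.
Proof. by apply: eq_bigr => i _; rewrite -mulrA (mulrC (x _ _)) mulrA. Qed.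

Lemma lorDl {R : realFieldType} (x y z : 'rV[R]_6) : lor (x + y) z = lor x z + lor y z.
Proof. rewrite /lor -big_split; apply: eq_bigr => i _; by rewrite !mxE mulrDr mulrDl. Qed.

Lemma lorZl {R : realFieldType} k (x z : 'rV[R]_6) : lor (k *: x) z = k * lor x z.
Proof. rewrite /lor mulr_sumr; apply: eq_bigr => i _; rewrite mxE; ring. Qed.

Lemma lorNl {R : realFieldType} (x z : 'rV[R]_6) : lor (- x) z = - lor x z.
Proof. by rewrite -scaleN1r lorZl mulN1r. Qed.

Lemma lorBl {R : realFieldType} (x y z : 'rV[R]_6) : lor (x - y) z = lor x z - lor y z.
Proof. by rewrite lorDl lorNl. Qed.

Lemma lor0l {R : realFieldType} (z : 'rV[R]_6) : lor 0 z = 0.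
Proof. by rewrite -(scale0r 0) lorZl mul0r. Qed.

Lemma lorDr {R : realFieldType} (x y z : 'rV[R]_6) : lor z (x + y) = lor z x + lor z y.
Proof. by rewrite !(lorC z) lorDl. Qed.
Lemma lorZr {R : realFieldType} k (x z : 'rV[R]_6) : lor z (k *: x) = k * lor z x.
Proof. by rewrite !(lorC z) lorZl. Qed.
Lemma lorBr {R : realFieldType} (x y z : 'rV[R]_6) : lor z (x - y) = lor z x - lor z y.
Proof. by rewrite !(lorC z) lorBl. Qed.

Definition good {R : realFieldType} (p : 'rV[R]_6) (phi : 'rV[R]_6 -> 'rV[R]_6) :=
  [/\ forall x y, phi (x + y) = phi x + phi y, forall k x, phi (k *: x) = k *: phi x,
      forall x y, lor (phi x) (phi y) = lor x y, forall x, phi x = 0 -> x = 0 &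
      phi p = p].

Lemma good_id {R : realFieldType} (p : 'rV[R]_6) : good p id.
Proof. by split. Qed.

Lemma good_comp {R : realFieldType} (p : 'rV[R]_6) f g :
  good p f -> good p g -> good p (f \o g).
Proof.
move=> [a1 b1 c1 d1 e1] [a2 b2 c2 d2 e2]; split => /=.
- by move=> x y; rewrite a2 a1.
- by move=> k x; rewrite b2 b1.
- by move=> x y; rewrite c1 c2.
- by move=> x /d1 /d2.
- by rewrite e2 e1.
Qed.

Lemma inv_deg {R : realFieldType} (a x : 'rV[R]_6) : lor a a = 0 -> inversion a x = x.
Proof. by move=> h; rewrite /inversion h invr0 mulr0 scale0r subr0. Qed.

Lemma good_inv {R : realFieldType} (p a : 'rV[R]_6) : lor a p = 0 -> good p (inversion a).
Proof.
move=> hap.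
have [h0|hq] := eqVneq (lor a a) 0.
  split => //; try by move=> *; rewrite !inv_deg.
  by move=> x; rewrite inv_deg.
have invol : forall x, inversion a (inversion a x) = x.
  move=> x; rewrite /inversion lorBl lorZl.
  have -> : 2 * (lor x a - 2 * lor x a / lor a a * lor a a) / lor a a
           = - (2 * lor x a / lor a a) by field.
  by rewrite scaleNr opprK subrK.
split.
- move=> x y; rewrite /inversion lorDl mulrDr mulrDl scalerDl opprD.
  by rewrite addrACA.
- move=> k x; rewrite /inversion lorZl scalerBr scalerA.
  by congr (_ - _ *: _); rewrite !mulrA (mulrC 2).
- move=> x y; rewrite /inversion lorBl !lorBr !lorZl !lorZr ?(lorC a y) ?(lorC a x).
  by field.
- move=> x hx; rewrite -(invol x) hx /inversion lor0l mulr0 mul0r scale0r subr0.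
  by [].
- by rewrite /inversion (lorC p) hap mulr0 mul0r scale0r subr0.
Qed.

Lemma PhiS {R : realFieldType} (p : 'rV[R]_6) s lam k :
  Phi p s lam k.+2 = inversion (Phi p s lam k.+1 (s k.+1) + lam k.+1 *: Phi p s lam k.+1 (s k.+2)
     - (1 + lam k.+1) *: p) \o Phi p s lam k.+1.
Proof. by []. Qed.

Lemma good_Phi {R : realFieldType} (p : 'rV[R]_6) s lam k :
  lor p p = -1 ->
  (forall i, (1 <= i <= k.+1)%N -> lor (s i) p = -1) -> good p (Phi p s lam k.+1).
Proof.
move=> hpp; elim: k => [|k IH] hs; first exact: good_id.
rewrite PhiS; have G := IH (fun i hi => hs i ltac:(lia)).
have [_ _ hiso _ hfix] := G.
apply: good_comp G; apply: good_inv.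
have hp : forall x, lor (Phi p s lam k.+1 x) p = lor x p.
  by move=> x; rewrite -[X in lor _ X]hfix hiso.
rewrite lorBl lorDl !lorZl !hp !hs ?hpp; try lia.
ring.
Qed.

Lemma in_net_le len i j : in_net len j -> (1 <= i <= j)%N -> in_net len i.
Proof. by rewrite /in_net; case: len => [n|] /=; lia. Qed.

Theorem theorem2p7 (R : realFieldType) (p : 'rV[R]_6) (V : int -> Prop)
    (len : option nat) (F : nat -> int -> 'rV[R]_6) (s : nat -> 'rV[R]_6)
    (lam : nat -> R) :
  lor p p = -1 ->
  consecutive V ->
  circ_net_sph p V len F s ->
  nondeg_net len s ->
  (forall i j, in_net len i -> in_net len j -> i <> j -> ~ proj_eq (s i) (s j)) ->
  (forall j, in_net len j -> lor (s j) p = -1) ->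
  circ_net_sph p V len (fun k t => Phi p s lam k (F k t))
                       (fun k => Phi p s lam k (s k)).
Proof.
move=> hpp hV [hF hR] hnd hdist hsp.
have goodk : forall j, in_net len j -> good p (Phi p s lam j).
  case=> [|j] hj; first by [].
  apply: good_Phi => // i hi; apply: hsp; exact: in_net_le hj hi.
split.
- move=> j hj; have [hadd hZ hiso hinj hfix] := goodk j hj.
  have [hc [hs0 [hss hsp']] hon] := hF j hj.
  split.
  + move=> t ht; have [h1 [h2 h3]] := hc t ht; split; last split.
    * by apply/eqP => /hinj H; rewrite H eqxx in h1.
    * by rewrite hiso h2.
    * by rewrite -[X in lor _ X]hfix hiso h3.
  + split; first by apply/eqP => /hinj H; rewrite H eqxx in hs0.
    by split; [rewrite hiso hss | rewrite -[X in lor _ X]hfix hiso].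
  + by move=> t ht; rewrite hiso hon.
- case=> [//|j] hj hj1 t ht ht1.
  have [hadd hZ hiso hinj hfix] := goodk _ hj.
  have [k1 [k2 [k3 [k4 [hnz hsum]]]]] := hR j.+1 hj hj1 t ht ht1.
  exists k1, k2, k3, k4; split => //.
  rewrite PhiS.
  set P := Phi p s lam j.+1.
  set n := (X in inversion X).
  rewrite /=.
  have hP0 : P 0 = 0 by have := hZ 0 0; rewrite !scale0r.
  have hS : k1 *: P (F j.+1 t) + k2 *: P (F j.+1 (t + 1)) + k3 *: P (F j.+2 (t + 1))
            + k4 *: P (F j.+2 t) = 0.
    by rewrite -!hZ -!hadd hsum; exact: hP0.
  set x := k1 *: F j.+1 t + k2 *: F j.+1 (t + 1).
  set w := k3 *: F j.+2 (t + 1) + k4 *: F j.+2 t.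
  have [hcj _ honj] := hF _ hj.
  have [hcj1 _ honj1] := hF _ hj1.
  have hxw : x + w = 0 by rewrite /x /w addrA hsum.
  have hx : lor x (s j.+1) = 0.
    by rewrite lorDl !lorZl !honj // !mulr0 addr0.
  have hw1 : lor w (s j.+2) = 0.
    by rewrite lorDl !lorZl !honj1 // !mulr0 addr0.
  have hwp : lor w p = 0.
    have [_ [_ e1]] := hcj1 _ ht1; have [_ [_ e2]] := hcj1 _ ht.
    by rewrite lorDl !lorZl e1 e2 !mulr0 addr0.
  have hw : lor w (s j.+1) = 0.
    by have := lor0l (s j.+1); rewrite -hxw lorDl hx add0r.
  have hPw : k3 * lor (P (F j.+2 (t + 1))) n + k4 * lor (P (F j.+2 t)) n = 0.
    rewrite -!lorZl -lorDl -!hZ -hadd -/w /n lorBr lorDr !lorZr !hiso.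
    have -> : lor (P w) p = lor w p by rewrite -[X in lor _ X]hfix hiso.
    by rewrite hw hw1 hwp !mulr0 addr0 subr0.
  clearbody n.
  rewrite /inversion !scalerBr !scalerA.
  have -> : k4 * (2 * lor (P (F j.+2 t)) n / lor n n) =
            - (k3 * (2 * lor (P (F j.+2 (t + 1))) n / lor n n)).
    apply/eqP; rewrite -addr_eq0 addrC; apply/eqP.
    have -> : forall a b c d q : R, a * (2 * b / q) + c * (2 * d / q) = (a * b + c * d) * (2 / q).
      by move=> *; ring.
    by rewrite hPw mul0r.
  rewrite scaleNr opprK.
  set u := (_ *: n).
  by rewrite !addrA addrAC subrK.
Qed.
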